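(* Let $\mathbb{K}$ be a field, $R=\mathbb{K}[X_1,\ldots,X_n]$, $J\subsetneq I\subset R$ monomial ideals. Let $I'$ and $J'$ be the monomial ideals in $\mathbb{K}[X_1,\ldots,X_n,X_{n+1}]$ obtained from $I$ and $J$ by replacing, in each minimal generator of $I$ and $J$, every occurrence of the variable $X_n$ by the product $X_nX_{n+1}$. Then $\operatorname{sdepth} I'/J'=\operatorname{sdepth} I/J+1$.
   Context: Stanley depth: with the fine multigrading, a Stanley decomposition of a finitely generated multigraded module $M$ is a finite family $(\mathbb{K}[Z_i], m_i)$ with $m_i$ homogeneous, $Z_i$ subsets of the variables, $m_i\mathbb{K}[Z_i]$ free over $\mathbb{K}[Z_i]$, and $M=\bigoplus_i m_i\mathbb{K}[Z_i]$ as multigraded $\mathbb{K}$-vector spaces; its depth is $\min_i|Z_i|$, and $\operatorname{sdepth}M$ is the maximal depth of a Stanley decomposition. *)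

(* Defs.v *)
From HB Require Import structures.
From mathcomp Require Import all_boot all_order all_algebra.
From mathcomp Require Import mpoly.
From Stdlib Require Import ClassicalEpsilon.
Set Implicit Arguments. Unset Strict Implicit. Unset Printing Implicit Defensive.
Import GRing.Theory.
Local Open Scope ring_scope.

Section MonomialStanley.
Variables (K : fieldType) (k : nat).

Definition polyset := {mpoly K[k]} -> Prop.

Definition mon_gen_ideal (S : 'X_{1..k} -> Prop) : polyset :=
  fun p => exists r : seq ({mpoly K[k]} * 'X_{1..k}),
    (forall x, x \in r -> S x.2) /\ p = \sum_(x <- r) x.1 * 'X_[x.2].

Definition is_monomial_ideal (I : polyset) : Prop :=
  exists S : 'X_{1..k} -> Prop, forall p, I p <-> mon_gen_ideal S p.

Definition mdivides (v u : 'X_{1..k}) : bool := [forall i, v i <= u i]%N.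

Definition min_gens (I : polyset) (u : 'X_{1..k}) : Prop :=
  I 'X_[u] /\ forall v : 'X_{1..k}, I 'X_[v] -> mdivides v u -> v = u.

Definition polys_in (Z : {set 'I_k}) (f : {mpoly K[k]}) : Prop :=
  forall m : 'X_{1..k}, m \in msupp f -> forall i, i \notin Z -> m i = 0%N.

(* A Stanley decomposition (K[Z_i], m_i)_{i<r} of the multigraded module I/J.
   m_i is a homogeneous element of I/J, represented by a homogeneous
   (fine multigrading) element of I, i.e. c * X^a in I. *)
Definition stanley_dec (I J : polyset) (r : nat)
    (D : 'I_r -> {set 'I_k} * {mpoly K[k]}) : Prop :=
  (forall i, I (D i).2 /\ exists (c : K) (a : 'X_{1..k}), (D i).2 = c *: 'X_[a])
  /\ (* m_i K[Z_i] is free over K[Z_i] (as a submodule of I/J) *)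
  (forall i f, polys_in (D i).1 f -> J ((D i).2 * f) -> f = 0)
  /\ (* the sum of the m_i K[Z_i] is all of I/J *)
  (forall p, I p -> exists f : 'I_r -> {mpoly K[k]},
      (forall i, polys_in (D i).1 (f i)) /\
      J (p - \sum_(i < r) (D i).2 * f i))
  /\ (* the sum is direct *)
  (forall f : 'I_r -> {mpoly K[k]}, (forall i, polys_in (D i).1 (f i)) ->
      J (\sum_(i < r) (D i).2 * f i) -> forall i, J ((D i).2 * f i)).

Definition has_sdec_depth_ge (I J : polyset) (d : nat) : Prop :=
  exists r (D : 'I_r -> {set 'I_k} * {mpoly K[k]}),
    @stanley_dec I J r D /\ forall i, (d <= #|(D i).1|)%N.

Definition pbool (P : Prop) : bool :=
  if excluded_middle_informative P then true else false.

(* sdepth I/J: the maximal depth of a Stanley decomposition (depths are <= k) *)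
Definition sdepth (I J : polyset) : nat :=
  (\max_(d < k.+1 | pbool (has_sdec_depth_ge I J d)) d)%N.

End MonomialStanley.

(* R = K[X_0,...,X_n] (so X_n is the last variable, ord_max);
   R' = K[X_0,...,X_n,X_{n+1}].  phi u replaces X_n by X_n X_{n+1} in X^u. *)
Definition ext_mon (n : nat) (u : 'X_{1..n.+1}) : 'X_{1..n.+2} :=
  [multinom (if unlift ord_max i is Some j then u j else u ord_max) | i < n.+2].

Definition ext_ideal (K : fieldType) (n : nat) (I : polyset K n.+1)
  : polyset K n.+2 :=
  mon_gen_ideal (fun w => exists u, min_gens I u /\ w = ext_mon u).

(* Main.v *)
Require Import Defs.
From HB Require Import structures.
From mathcomp Require Import all_boot all_order all_algebra.
From mathcomp Require Import mpoly.
From Stdlib Require Import Classical ClassicalEpsilon.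
From mathcomp Require Import zify.
Set Implicit Arguments. Unset Strict Implicit. Unset Printing Implicit Defensive.
Import GRing.Theory.
Local Open Scope ring_scope.
Section Mon.
Variables (K : fieldType) (k : nat).
Implicit Types (p q : {mpoly K[k]}) (m a : 'X_{1..k}).

Definition gen (S : 'X_{1..k} -> Prop) m := exists2 s, S s & (s <= m)%MM.

Lemma mon_genP (S : 'X_{1..k} -> Prop) p :
  mon_gen_ideal S p <-> forall m, m \in msupp p -> gen S m.
Proof.
split.
  case=> r [rS ->] m /msupp_sum_le /flattenP [s /mapP [x xr ->]].
  rewrite (perm_mem (msuppMX _ _)) => /mapP [m' _ ->].
  move: xr; rewrite filter_predT => xr.
  by rewrite /gen; exists x.2; [exact: rS xr | exact: lem_addr].
move=> H.
have sel : forall m, {s | m \in msupp p -> S s /\ (s <= m)%MM}.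
  move=> m; case: (excluded_middle_informative (m \in msupp p)) => hm.
    have : exists s, S s /\ (s <= m)%MM by have [s Ss lsm] := H m hm; exists s.
    by move/constructive_indefinite_description => [s' Hs']; exists s'.
  by exists m.
pose sf m := sval (sel m).
exists [seq (p@_m *: 'X_[m - sf m], sf m) | m <- msupp p]; split.
  move=> x /mapP [m hm ->] /=; exact: (proj1 (svalP (sel m) hm)).
rewrite big_map [LHS]mpolyE big_seq [RHS]big_seq; apply: eq_bigr => m hm /=.
rewrite -scalerAl -mpolyXD submK //; exact: (proj2 (svalP (sel m) hm)).
Qed.

Lemma mon_idealP (I : polyset K k) : is_monomial_ideal I ->
  forall p, I p <-> forall m, m \in msupp p -> I 'X_[m].
Proof.
case=> S HS p; rewrite HS mon_genP; split=> H m hm.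
  by apply/HS/mon_genP => m'; rewrite msuppX inE => /eqP ->; exact: H.
by have /HS/mon_genP := H m hm; apply; rewrite msuppX inE.
Qed.

Lemma mon_ideal0 (I : polyset K k) : is_monomial_ideal I -> I 0.
Proof. by move=> hI; apply/(mon_idealP hI) => m; rewrite msupp0. Qed.

Lemma mon_ideal_up (I : polyset K k) : is_monomial_ideal I ->
  forall m m', I 'X_[m] -> (m <= m')%MM -> I 'X_[m'].
Proof.
case=> S HS m m' /HS /mon_genP H le; apply/HS/mon_genP => x.
rewrite msuppX inE => /eqP ->.
have := H m; rewrite msuppX mem_head => /(_ isT) [s Ss lsm]; rewrite /gen; exists s => //; exact: lepm_trans lsm le.
Qed.

Lemma mon_idealZ (I : polyset K k) : is_monomial_ideal I ->
  forall c m, I 'X_[m] -> I (c *: 'X_[m]).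
Proof.
move=> hI c m Hm; apply/(mon_idealP hI) => x /msuppZ_le.
by rewrite msuppX inE => /eqP ->.
Qed.

End Mon.
Lemma pboolP (P : Prop) : reflect P (pbool P).
Proof. by rewrite /pbool; case: excluded_middle_informative => h; constructor. Qed.

Section Comb.
Variable k : nat.
Implicit Types (m a u : 'X_{1..k}).
Notation piece := ({set 'I_k} * 'X_{1..k})%type.

Definition cone (x : piece) m : bool :=
  (x.2 <= m)%MM && [forall i, (i \notin x.1) ==> (m i == x.2 i)].

Definition cdec (M : 'X_{1..k} -> Prop) (s : seq piece) :=
  forall m, count (cone^~ m) s = pbool (M m).

Definition has_cdec (M : 'X_{1..k} -> Prop) (d : nat) :=
  exists s, cdec M s /\ forall x, x \in s -> (d <= #|x.1|)%N.

Definition cdecF (M : 'X_{1..k} -> Prop) r (F : 'I_r -> piece) :=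
  [/\ forall i m, cone (F i) m -> M m,
      forall m, M m -> exists i, cone (F i) m &
      forall i j m, cone (F i) m -> cone (F j) m -> i = j].

Lemma count_nth (T : Type) (x0 : T) (a : pred T) s :
  count a s = (\sum_(i < size s) a (nth x0 s i))%N.
Proof.
elim: s => [|x s IH] /=; first by rewrite big_ord0.
by rewrite big_ord_recl /= IH.
Qed.

Lemma count_enum (T : Type) r (F : 'I_r -> T) (a : pred T) :
  count a [seq F i | i <- enum 'I_r] = (\sum_(i < r) a (F i))%N.
Proof.
rewrite count_map -sum1_count big_enum_cond /= big_mkcond /=.
by apply: eq_bigr => i _; case: (a (F i)).
Qed.

Lemma cdecF_sum M r (F : 'I_r -> piece) :
  cdecF M F <-> forall m, (\sum_(i < r) cone (F i) m)%N = pbool (M m).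
Proof.
split.
  case=> F1 F2 F3 m; case: pboolP => hM.
    have [i hi] := F2 m hM; rewrite (bigD1 i) //= hi big1 // => j nji.
    by case hj: (cone (F j) m) => //; move: nji; rewrite (F3 j i m hj hi) eqxx.
  by rewrite big1 // => i _; case hi: (cone (F i) m) => //; case: hM; exact: F1 hi.
move=> H; split.
- move=> i m hi; have := H m; rewrite (bigD1 i) //= hi.
  by case: pboolP.
- move=> m hM; have := H m; case: pboolP => // _ hs; apply: NNPP => hn.
  move: hs; rewrite big1 // => i _; case hi: (cone (F i) m) => //; case: hn; by exists i.
- move=> i j m hi hj; apply: NNPP => nij.
  have := H m; rewrite (bigD1 i) //= hi (bigD1 j) /=; last by rewrite eq_sym; exact/eqP.
  by rewrite hj; case: pbool.
Qed.

End Comb.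
Section Cone.
Variable k : nat.
Implicit Types (m a u : 'X_{1..k}) (Z : {set 'I_k}).

Lemma coneP Z a m :
  reflect (exists2 u : 'X_{1..k}, (forall i, i \notin Z -> u i = 0%N) & m = (a + u)%MM)
          (cone (Z, a) m).
Proof.
apply: (iffP andP) => /= [[le /forallP H]|[u hu ->]].
  exists (m - a)%MM; last by rewrite addmC submK.
  by move=> i iZ; rewrite mnmBE (eqP (implyP (H i) iZ)) subnn.
split; first exact: lem_addr.
apply/forallP => i; apply/implyP => iZ; by rewrite mnmDE hu // addn0.
Qed.

Lemma cone_refl (x : {set 'I_k} * 'X_{1..k}) : cone x x.2.
Proof.
case: x => Z a; apply/coneP; exists 0%MM; first by move=> i _; rewrite mnm0E.
by rewrite addm0.
Qed.

End Cone.

Section PolyIn.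
Variables (K : fieldType) (k : nat).
Implicit Types (p q f : {mpoly K[k]}) (m a u : 'X_{1..k}) (Z : {set 'I_k}).

Lemma polys_inX Z u : polys_in Z ('X_[u] : {mpoly K[k]}) <-> forall i, i \notin Z -> u i = 0%N.
Proof.
split=> [H i iZ | H m]; first by apply: H iZ; rewrite msuppX mem_head.
by rewrite msuppX inE => /eqP ->.
Qed.

Lemma polys_inZ Z c f : polys_in Z f -> polys_in Z (c *: f).
Proof. by move=> H m /msuppZ_le; exact: H. Qed.

Lemma polys_inN Z f : polys_in Z f -> polys_in Z (- f).
Proof. by move=> H m; rewrite (perm_mem (msuppN _)); exact: H. Qed.

Lemma polys_in0 Z : polys_in Z (0 : {mpoly K[k]}).
Proof. by move=> m; rewrite msupp0. Qed.

Lemma polys_in1 Z : polys_in Z (1 : {mpoly K[k]}).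
Proof. by move=> m; rewrite msupp1 inE => /eqP -> i _; rewrite mnm0E. Qed.

Lemma mpolyX_neq0 u : ('X_[u] : {mpoly K[k]}) != 0.
Proof. by rewrite -msupp_eq0 msuppX. Qed.

Lemma msuppMX_P f a m : m \in msupp (f * 'X_[a]) -> exists2 m', m' \in msupp f & m = (a + m')%MM.
Proof. by rewrite (perm_mem (msuppMX _ _)) => /mapP [m' h ->]; exists m'. Qed.

Lemma msuppMX_in f a m : m \in msupp f -> (a + m)%MM \in msupp (f * 'X_[a]).
Proof. by rewrite !mcoeff_msupp mcoeffMX. Qed.

End PolyIn.
Section Transfer.
Variables (K : fieldType) (k : nat) (I J : polyset K k).
Hypotheses (hI : is_monomial_ideal I) (hJ : is_monomial_ideal J).
Implicit Types (p q f : {mpoly K[k]}) (m a u : 'X_{1..k}) (Z : {set 'I_k}).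

Definition Mon m := I 'X_[m] /\ ~ J 'X_[m].

Lemma cone_polys (x : {set 'I_k} * 'X_{1..k}) f m :
  polys_in x.1 f -> m \in msupp f -> cone x (x.2 + m)%MM.
Proof. by case: x => Z a H hm; apply/coneP; exists m => // i; exact: H. Qed.

Lemma dec_of_cdecF r (F : 'I_r -> {set 'I_k} * 'X_{1..k}) : cdecF Mon F ->
  stanley_dec I J (fun i => ((F i).1, ('X_[(F i).2] : {mpoly K[k]}))).
Proof.
case=> F1 F2 F3; split; [|split; [|split]] => /=.
- move=> i; split; last by exists 1, (F i).2; rewrite scale1r.
  exact: (F1 i _ (cone_refl (F i))).1.
- move=> i f Hf HJ; apply/eqP; apply: NNPP => /negP nz.
  case E: (msupp f) => [|m' t]; first by move: nz; rewrite -msupp_eq0 E.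
  have hm' : m' \in msupp f by rewrite E mem_head.
  have := (mon_idealP hJ _).1 HJ ((F i).2 + m')%MM.
  rewrite mulrC => /(_ (msuppMX_in _ hm')) hJm.
  by have /F1 [_] := cone_polys Hf hm'.
- move=> p Ip.
  pose G m := p@_m *: ('X_[m] : {mpoly K[k]}).
  exists (fun i => \sum_(m <- msupp p | cone (F i) m) p@_m *: 'X_[m - (F i).2]).
  split.
    move=> i m' /msupp_sum_le /flattenP [s /mapP [m hm ->]].
    move/msuppZ_le; rewrite msuppX inE => /eqP ->.
    move: hm; rewrite mem_filter => /andP [hc _].
    move: hc; case: (F i) => Z a /coneP [u hu ->] /= j jZ.
    by rewrite addmC addmK; exact: hu.
  have E1 : forall i, 'X_[(F i).2] * (\sum_(m <- msupp p | cone (F i) m) p@_m *: 'X_[m - (F i).2])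
      = \sum_(m <- msupp p | cone (F i) m) G m.
    move=> i; rewrite mulr_sumr; apply: eq_bigr => m hc.
    rewrite -scalerAr -mpolyXD /G; congr (_ *: 'X_[_]).
    by move: hc; case: (F i) => Z a /coneP [u hu ->] /=; rewrite [(a + u)%MM]addmC addmK addmC.
  under eq_bigr do rewrite E1.
  rewrite (eq_bigr (fun i => \sum_(m <- msupp p) (if cone (F i) m then G m else 0)));
    last by move=> i _; rewrite big_mkcond.
  rewrite exchange_big /=.
  rewrite (eq_bigr (fun m => if pbool (Mon m) then G m else 0)); last first.
    move=> m _; case: pboolP => hM.
      have [i0 hi0] := F2 m hM; rewrite (bigD1 i0) //= hi0 big1 ?addr0 // => j nj.
      by case hj: (cone (F j) m) => //; move: nj; rewrite (F3 j i0 m hj hi0) eqxx.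
    by rewrite big1 // => i _; case hi: (cone (F i) m) => //; case: hM; exact: F1 hi.
  rewrite -big_mkcond.
  have E : p = \sum_(m <- msupp p | pbool (Mon m)) G m + \sum_(m <- msupp p | ~~ pbool (Mon m)) G m.
    by rewrite {1}[p]mpolyE (bigID (fun m => pbool (Mon m))) /=.
  rewrite [X in J (X - _)]E addrC addKr.
  apply/(mon_idealP hJ) => m' /msupp_sum_le /flattenP [s /mapP [m hm ->]].
  move/msuppZ_le; rewrite msuppX inE => /eqP ->.
  move: hm; rewrite mem_filter => /andP [/pboolP hM hmp].
  apply: NNPP => hJm; apply: hM; split => //.
  exact: (mon_idealP hI _).1 Ip m hmp.
- move=> f Hf HJ i.
  suff -> : f i = 0 by rewrite mulr0; exact: mon_ideal0 hJ.
  apply/eqP; apply: NNPP => /negP nz.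
  case E: (msupp (f i)) => [|m' t]; first by move: nz; rewrite -msupp_eq0 E.
  have hm' : m' \in msupp (f i) by rewrite E mem_head.
  have hc := cone_polys (Hf i) hm'.
  set m := ((F i).2 + m')%MM in hc.
  have hcoef : (\sum_j 'X_[(F j).2] * f j)@_m = (f i)@_m'.
    rewrite raddf_sum (bigD1 i) //= big1 ?addr0; first by rewrite mulrC mcoeffMX.
    move=> j nji; apply/eqP; apply: NNPP => /negP nz2.
    move: nz2; rewrite -mcoeff_msupp mulrC => /msuppMX_P [m'' hm'' Em].
    have hcj := cone_polys (Hf j) hm''; rewrite -Em in hcj.
    by move: nji; rewrite (F3 j i m hcj hc) eqxx.
  have : m \in msupp (\sum_j 'X_[(F j).2] * f j) by rewrite mcoeff_msupp hcoef -mcoeff_msupp.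
  by move/((mon_idealP hJ _).1 HJ); have [_] := F1 i m hc.
Qed.
End Transfer.

Section Transfer2.
Variables (K : fieldType) (k : nat) (I J : polyset K k).
Hypotheses (hI : is_monomial_ideal I) (hJ : is_monomial_ideal J).

Lemma cdecF_of_dec r (D : 'I_r -> {set 'I_k} * {mpoly K[k]}) : stanley_dec I J D ->
  exists F : 'I_r -> {set 'I_k} * 'X_{1..k}, cdecF (Mon I J) F /\ forall i, (F i).1 = (D i).1.
Proof.
case=> [H1 [H2 [H3 H4]]].
have ch : forall i, {ca : K * 'X_{1..k} | (D i).2 = ca.1 *: 'X_[ca.2]}.
  move=> i; apply: constructive_indefinite_description.
  by have [_ [c [a ->]]] := H1 i; exists (c, a).
pose c i := (sval (ch i)).1; pose a i := (sval (ch i)).2.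
have Dc i : (D i).2 = c i *: 'X_[a i] := svalP (ch i).
have cnz i : c i != 0.
  apply/negP => /eqP c0; have := H2 i 1 (@polys_in1 K k _).
  rewrite Dc c0 scale0r mul0r => /(_ (mon_ideal0 hJ)) /eqP; by rewrite oner_eq0.
have F1 : forall i m, cone ((D i).1, a i) m -> Mon I J m.
  move=> i m /coneP [u hu ->]; split.
    have Ia : I 'X_[a i].
      by apply: (mon_idealP hI _).1 (H1 i).1 (a i) _; rewrite Dc msuppMCX // mem_head.
    exact: mon_ideal_up hI _ _ Ia (lem_addr _ _).
  move=> hJm; have := H2 i 'X_[u] ((polys_inX _ _ _).2 hu).
  rewrite Dc -scalerAl -mpolyXD => /(_ (mon_idealZ hJ _ hJm)) /eqP.
  by rewrite (negbTE (mpolyX_neq0 _ _)).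
exists (fun i => ((D i).1, a i)); split => //; split => //.
- move=> m [Im nJm]; have [f [Hf HJ]] := H3 _ Im.
  apply: NNPP => hn.
  have z : forall i, ((D i).2 * f i)@_m = 0.
    move=> i; apply/eqP; apply: NNPP => /negP nz; apply: hn; exists i.
    move: nz; rewrite -mcoeff_msupp Dc -scalerAl mulrC => /msuppZ_le /msuppMX_P [m' hm' ->].
    exact: (@cone_polys _ _ ((D i).1, a i) _ _ (Hf i) hm').
  have : m \in msupp ('X_[m] - \sum_i (D i).2 * f i).
    rewrite mcoeff_msupp mcoeffB raddf_sum big1 => [|i _]; last exact: z i.
    by rewrite subr0 -mcoeff_msupp msuppX mem_head.
  by move/((mon_idealP hJ _).1 HJ).
- move=> i j m hi hj; apply: NNPP => nij.
  have key : forall l, cone ((D l).1, a l) m ->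
      (D l).2 * ((c l)^-1 *: 'X_[(m - a l)%MM]) = 'X_[m].
    move=> l /andP [/= le _]; rewrite Dc -scalerAl -scalerAr scalerA mulfV // scale1r.
    by rewrite -mpolyXD addmC submK.
  pose f l : {mpoly K[k]} := if l == i then (c i)^-1 *: 'X_[(m - a i)%MM]
        else if l == j then - ((c j)^-1 *: 'X_[(m - a j)%MM]) else 0.
  have Hf : forall l, polys_in (D l).1 (f l).
    have P0 : forall l, cone ((D l).1, a l) m -> polys_in (D l).1 ((c l)^-1 *: 'X_[(m - a l)%MM]).
      move=> l /coneP [u hu ->]; apply: polys_inZ; apply/polys_inX.
      by rewrite addmC addmK.
    move=> l; rewrite /f; case: eqP => [->|_]; first exact: P0.
    case: eqP => [->|_]; [exact/polys_inN/P0 | exact: polys_in0].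
  have sum0 : \sum_l (D l).2 * f l = 0.
    rewrite (bigD1 i) //= (bigD1 j) /=; last by apply/eqP => eji; apply: nij.
    rewrite big1; last by move=> l /andP [nli nlj]; rewrite /f (negbTE nli) (negbTE nlj) mulr0.
    rewrite /f eqxx; case: eqP => [eji|_]; first by case: nij.
    by rewrite eqxx mulrN !key // addr0 subrr.
  have := H4 f Hf; rewrite sum0 => /(_ (mon_ideal0 hJ) i).
  rewrite /f eqxx key // => hJm.
  by have [_] := F1 i m hi.
Qed.

End Transfer2.

Lemma transfer (K : fieldType) (k : nat) (I J : polyset K k) d :
  is_monomial_ideal I -> is_monomial_ideal J ->
  has_sdec_depth_ge I J d <-> has_cdec (Mon I J) d.
Proof.
move=> hI hJ; split.
  case=> r [D [hD hd]].
  have [F [hF F1]] := cdecF_of_dec hI hJ hD.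
  exists [seq F i | i <- enum 'I_r]; split.
    by move=> m; rewrite count_enum; exact: (cdecF_sum _ _).1 hF m.
  by move=> x /mapP [i _ ->]; rewrite F1.
case=> s [hs hd].
pose x0 : {set 'I_k} * 'X_{1..k} := (set0, 0%MM).
pose F (i : 'I_(size s)) := nth x0 s i.
have hF : cdecF (Mon I J) F.
  by apply/cdecF_sum => m; rewrite -hs (count_nth x0).
exists (size s), (fun i => ((F i).1, ('X_[(F i).2] : {mpoly K[k]}))); split.
  exact: dec_of_cdecF.
by move=> i /=; apply: hd; exact: mem_nth.
Qed.
Section Ext.
Variable n : nat.

Definition proj (w : 'X_{1..n.+2}) : 'X_{1..n.+1} :=
  [multinom (if i == ord_max then minn (w (lift ord_max i)) (w ord_max)
             else w (lift ord_max i)) | i < n.+1].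

Lemma ext_monE_lift (u : 'X_{1..n.+1}) j : ext_mon u (lift ord_max j) = u j.
Proof. by rewrite /ext_mon mnmE liftK. Qed.

Lemma ext_monE_max (u : 'X_{1..n.+1}) : ext_mon u ord_max = u ord_max.
Proof. by rewrite /ext_mon mnmE unlift_none. Qed.

Lemma projE (w : 'X_{1..n.+2}) i : proj w i =
  if i == ord_max then minn (w (lift ord_max i)) (w ord_max) else w (lift ord_max i).
Proof. by rewrite /proj mnmE. Qed.

Lemma ext_le (u : 'X_{1..n.+1}) w : (ext_mon u <= w)%MM = (u <= proj w)%MM.
Proof.
apply/mnm_lepP/mnm_lepP => H i.
  rewrite projE; case: eqP => [->|_]; last by rewrite -ext_monE_lift H.
  by rewrite leq_min -{1}ext_monE_lift H -ext_monE_max H.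
case: (unliftP ord_max i) => [j ->|->].
  rewrite ext_monE_lift; apply: leq_trans (H j) _; rewrite projE.
  by case: eqP => // _; exact: geq_minl.
by rewrite ext_monE_max; apply: leq_trans (H ord_max) _; rewrite projE eqxx geq_minr.
Qed.
End Ext.

Section MinGen.
Variables (K : fieldType) (k : nat).

Lemma mdividesE (v u : 'X_{1..k}) : mdivides v u = (v <= u)%MM.
Proof. by apply/forallP/mnm_lepP. Qed.

Lemma min_gen_exists (I : polyset K k) v : I 'X_[v] ->
  exists2 u, min_gens I u & (u <= v)%MM.
Proof.
move: {2}(mdeg v) (leqnn (mdeg v)) => N; elim: N v => [|N IH] v hv Iv.
  exists v; last exact: lepm_refl.
  split => // v' _; rewrite mdividesE => le.
  move: hv; rewrite leqn0 mdeg_eq0 => /eqP v0; apply/mnmP => i.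
  by move/mnm_lepP: le => /(_ i); rewrite v0 mnm0E leqn0 => /eqP ->.
case: (classic (min_gens I v)) => hmin; first by exists v => //; exact: lepm_refl.
have [v' [Iv' le ne]] : exists v', [/\ I 'X_[v'], (v' <= v)%MM & v' <> v].
  apply: NNPP => hn; apply: hmin; split => // v' Iv'; rewrite mdividesE => le.
  by apply: NNPP => ne; apply: hn; exists v'.
have lt : (mdeg v' < mdeg v)%N.
  have E : v = (v' + (v - v'))%MM by rewrite addmC submK.
  rewrite [in X in (_ < X)%N]E mdegD -[X in (X < _)%N]addn0 ltn_add2l lt0n mdeg_eq0.
  by apply/eqP => e; apply: ne; rewrite E e addm0.
have hv' : (mdeg v' <= N)%N by rewrite -ltnS (leq_trans lt hv).
have [u hu leu] := IH v' hv' Iv'.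
by exists u => //; exact: lepm_trans leu le.
Qed.
End MinGen.

Section ExtIdeal.
Variables (K : fieldType) (n : nat) (I : polyset K n.+1).
Hypothesis hI : is_monomial_ideal I.

Lemma ext_ideal_mon : is_monomial_ideal (ext_ideal I).
Proof. by exists (fun w => exists u, min_gens I u /\ w = ext_mon u) => p. Qed.

Lemma ext_memP (w : 'X_{1..n.+2}) : ext_ideal I 'X_[w] <-> I 'X_[proj w].
Proof.
rewrite /ext_ideal mon_genP; split.
  move/(_ w); rewrite msuppX mem_head => /(_ isT) [s [u [[Iu _] ->]]].
  by rewrite ext_le => le; exact: mon_ideal_up hI _ _ Iu le.
move=> Ip m; rewrite msuppX inE => /eqP ->.
have [u hu le] := min_gen_exists Ip.
by exists (ext_mon u); [exists u | rewrite ext_le].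
Qed.

End ExtIdeal.

Lemma Mon_ext (K : fieldType) (n : nat) (I J : polyset K n.+1)
  (hI : is_monomial_ideal I) (hJ : is_monomial_ideal J) (w : 'X_{1..n.+2}) :
  Mon (ext_ideal I) (ext_ideal J) w <-> Mon I J (proj w).
Proof.
rewrite /Mon; split=> [[h1 h2]|[h1 h2]]; split.
- exact/(ext_memP hI).
- by move=> hj; apply: h2; apply/(ext_memP hJ).
- exact/(ext_memP hI).
- by move=> hj; apply: h2; apply/(ext_memP hJ).
Qed.
Lemma coneP' k (x : {set 'I_k} * 'X_{1..k}) (m : 'X_{1..k}) :
  reflect (forall i, x.2 i <= m i /\ (i \notin x.1 -> m i = x.2 i))%N (cone x m).
Proof.
apply: (iffP andP) => [[/mnm_lepP le /forallP H] i|H]; split.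
- exact: le.
- by move=> ni; apply/eqP; exact: (implyP (H i)).
- by apply/mnm_lepP => i; case: (H i).
- by apply/forallP => i; apply/implyP => ni; apply/eqP; case: (H i) => _; apply.
Qed.

Section Lift.
Variable n : nat.
Notation m2 := (@ord_max n.+1).
Notation m1 := (@ord_max n).
Notation L := (lift m2).
Implicit Types (x : {set 'I_n.+1} * 'X_{1..n.+1}) (w : 'X_{1..n.+2}).

Definition liftS (Z : {set 'I_n.+1}) : {set 'I_n.+2} := [set L j | j in Z].

Lemma mem_liftS Z j : (L j \in liftS Z) = (j \in Z).
Proof. exact/mem_imset/lift_inj. Qed.

Lemma max_notin_liftS Z : m2 \notin liftS Z.
Proof. by apply/imsetP => [[j _ E]]; move: (neq_lift m2 j); rewrite -E eqxx. Qed.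

Lemma Lm2 j : (L j == m2) = false.
Proof. by apply/negbTE; rewrite eq_sym neq_lift. Qed.

Lemma card_liftS Z : #|liftS Z| = #|Z|.
Proof. exact/card_imset/lift_inj. Qed.

Lemma forall_split2 (P : 'I_n.+2 -> Prop) :
  (forall i, P i) <-> (forall j, P (L j)) /\ P m2.
Proof.
split=> [H|[H1 H2] i]; first by split.
by case: (unliftP m2 i) => [j ->|->].
Qed.

Lemma forall_split1 (P : 'I_n.+1 -> Prop) :
  (forall i, P i) <-> (forall j, j != m1 -> P j) /\ P m1.
Proof.
split=> [H|[H1 H2] i]; first by split.
by case: (eqVneq i m1) => [->|]; [|exact: H1].
Qed.

Definition pieces (x : {set 'I_n.+1} * 'X_{1..n.+1}) : seq ({set 'I_n.+2} * 'X_{1..n.+2}) :=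
  if m1 \in x.1 then [:: (m2 |: liftS x.1, ext_mon x.2)]
  else [:: (m2 |: liftS x.1, ext_mon x.2);
           (L m1 |: liftS x.1, (ext_mon x.2 + U_(L m1))%MM)].

Definition common (x : {set 'I_n.+1} * 'X_{1..n.+1}) (w : 'X_{1..n.+2}) :=
  forall j, j != m1 -> (x.2 j <= w (L j) /\ (j \notin x.1 -> w (L j) = x.2 j))%N.

Lemma cone_proj x w : cone x (proj w) <-> common x w /\
   (x.2 m1 <= minn (w (L m1)) (w m2) /\ (m1 \notin x.1 -> minn (w (L m1)) (w m2) = x.2 m1))%N.
Proof.
rewrite -(rwP (coneP' _ _)) forall_split1 projE eqxx.
split=> [[H1 H2]|[H1 H2]]; split => // j nj; [move: (H1 j nj)|move: (H1 j nj)];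
  by rewrite projE (negbTE nj).
Qed.

Lemma memL Z j : (L j \in m2 |: liftS Z) = (j \in Z).
Proof. by rewrite in_setU1 Lm2 mem_liftS. Qed.

Lemma cone_P1 x w : cone (m2 |: liftS x.1, ext_mon x.2) w <-> common x w /\
   (x.2 m1 <= w (L m1) /\ (m1 \notin x.1 -> w (L m1) = x.2 m1) /\ x.2 m1 <= w m2)%N.
Proof.
rewrite -(rwP (coneP' _ _)) forall_split2 /= forall_split1.
split=> [[[H1 [H2 H2']] [H3 _]]|[H1 [H2 [H3 H4]]]].
  rewrite ext_monE_max in H3; rewrite ext_monE_lift in H2; rewrite memL ext_monE_lift in H2'.
  split=> //; move=> j nj; have [a b] := H1 j nj.
  by rewrite memL ext_monE_lift in b; rewrite ext_monE_lift in a.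
split; [split; [|split]|split].
- move=> j nj; have [a b] := H1 j nj; rewrite memL !ext_monE_lift; by split.
- by rewrite ext_monE_lift.
- by rewrite memL ext_monE_lift.
- by rewrite ext_monE_max.
- by rewrite in_setU1 eqxx.
Qed.

Lemma cone_P2 x w : m1 \notin x.1 ->
  cone (L m1 |: liftS x.1, (ext_mon x.2 + U_(L m1))%MM) w <-> common x w /\
   (x.2 m1 < w (L m1) /\ w m2 = x.2 m1)%N.
Proof.
move=> nm; rewrite -(rwP (coneP' _ _)) forall_split2 /= forall_split1.
have E j : (ext_mon x.2 + U_(L m1))%MM (L j) = (x.2 j + (m1 == j))%N.
  by rewrite mnmDE mnm1E ext_monE_lift (inj_eq lift_inj).
have E2 : (ext_mon x.2 + U_(L m1))%MM m2 = x.2 m1.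
  by rewrite mnmDE mnm1E ext_monE_max Lm2 addn0.
have M j : j != m1 -> (L j \in L m1 |: liftS x.1) = (j \in x.1).
  by move=> nj; rewrite in_setU1 (inj_eq lift_inj) (negbTE nj) mem_liftS.
have M2 : (m2 \in L m1 |: liftS x.1) = false.
  by rewrite in_setU1 eq_sym Lm2 (negbTE (max_notin_liftS _)).
split=> [[[H1 [H2 H2']] [H3 H4]]|[H1 [H2 H3]]].
  rewrite E eqxx addn1 in H2; rewrite E2 M2 in H4; rewrite E2 in H3.
  split; last by split => //; exact: H4.
  move=> j nj; have [a b] := H1 j nj.
  rewrite M // E eq_sym (negbTE nj) addn0 in b; rewrite E eq_sym (negbTE nj) addn0 in a.
  by split.
split; [split; [|split]|split].
- move=> j nj; have [a b] := H1 j nj; rewrite M // E eq_sym (negbTE nj) addn0; by split.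
- by rewrite E eqxx addn1.
- by rewrite in_setU1 eqxx.
- by rewrite E2 H3.
- by rewrite E2.
Qed.

Lemma count_pieces x w : count (fun y => cone y w) (pieces x) = cone x (proj w).
Proof.
rewrite /pieces; case: ifP => hm /=.
  rewrite addn0; congr nat_of_bool; apply/idP/idP.
    move/cone_P1 => [H1 [H2 [H3 H4]]]; apply/cone_proj; split => //.
    by rewrite leq_min H2 H4 hm.
  move/cone_proj => [H1 [H2 H3]]; apply/cone_P1; split => //.
  by rewrite hm; move: H2; rewrite leq_min => /andP [-> ->].
have hm' : m1 \notin x.1 by rewrite hm.
rewrite addn0.
case: (boolP (cone x (proj w))) => [/cone_proj [H1 [H2 H3]]|nc].
  have H3' := H3 hm'.
  case: (leqP (w (L m1)) (w m2)) => le.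
    have e : w (L m1) = x.2 m1 by rewrite -H3' (minn_idPl le).
    have -> : cone (m2 |: liftS x.1, ext_mon x.2) w.
      by apply/cone_P1; split => //; split; [rewrite e|split => //; rewrite -e].
    suff -> : cone (L m1 |: liftS x.1, (ext_mon x.2 + U_(L m1))%MM) w = false by [].
    by apply/negbTE/negP => /(cone_P2 _ hm') [_ [lt _]]; move: lt; rewrite e ltnn.
  have e : w m2 = x.2 m1 by rewrite -H3' (minn_idPr (ltnW le)).
  have -> : cone (L m1 |: liftS x.1, (ext_mon x.2 + U_(L m1))%MM) w.
    by apply/(cone_P2 _ hm'); split => //; split => //; rewrite -e.
  suff -> : cone (m2 |: liftS x.1, ext_mon x.2) w = false by [].
  apply/negbTE/negP => /cone_P1 [_ [_ [H5 _]]]; move: (H5 hm') le => ->.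
  by rewrite e ltnn.
have -> : cone (m2 |: liftS x.1, ext_mon x.2) w = false.
  apply/negbTE/negP => /cone_P1 [H1 [H2 [H3 H4]]]; case/negP: nc; apply/cone_proj.
  split => //; rewrite (H3 hm') (minn_idPl _) ?leqnn // -(H3 hm') //.
suff -> : cone (L m1 |: liftS x.1, (ext_mon x.2 + U_(L m1))%MM) w = false by [].
apply/negbTE/negP => /(cone_P2 _ hm') [H1 [H2 H3]]; case/negP: nc; apply/cone_proj.
split => //; rewrite H3 (minn_idPr (ltnW H2)); by split.
Qed.

End Lift.
Lemma cdec_up n (M : 'X_{1..n.+1} -> Prop) d :
  has_cdec M d -> has_cdec (fun w : 'X_{1..n.+2} => M (proj w)) d.+1.
Proof.
case=> s [hs hd]; exists (flatten [seq pieces y | y <- s]); split.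
  move=> w; rewrite count_flatten -map_comp.
  rewrite (eq_map (g := fun y => nat_of_bool (cone y (proj w)))); last first.
    by move=> y /=; rewrite count_pieces.
  by rewrite sumn_count hs.
move=> x /flattenP [t /mapP [y ys ->]]; have := hd y ys.
rewrite /pieces; case: ifP => hm; rewrite !inE => le.
  move/eqP => -> /=; rewrite cardsU1 max_notin_liftS card_liftS; by [].
case/orP => /eqP -> /=; rewrite cardsU1 card_liftS.
  by rewrite max_notin_liftS.
by rewrite mem_liftS hm.
Qed.

Section Down.
Variable n : nat.
Notation m2 := (@ord_max n.+1).
Notation m1 := (@ord_max n).
Notation L := (lift m2).

Definition emb (N : nat) (v : 'X_{1..n.+1}) : 'X_{1..n.+2} :=
  [multinom (if unlift m2 i is Some j then v j else (v m1 + N)%N) | i < n.+2].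

Lemma embE_lift N v j : emb N v (L j) = v j.
Proof. by rewrite /emb mnmE liftK. Qed.

Lemma embE_max N v : emb N v m2 = (v m1 + N)%N.
Proof. by rewrite /emb mnmE unlift_none. Qed.

Lemma proj_emb N v : proj (emb N v) = v.
Proof.
apply/mnmP => j; rewrite projE !embE_lift embE_max.
by case: eqP => [->|//]; rewrite (minn_idPl _) // leq_addr.
Qed.

Definition restr (y : {set 'I_n.+2} * 'X_{1..n.+2}) : {set 'I_n.+1} * 'X_{1..n.+1} :=
  ([set j | L j \in y.1], [multinom y.2 (L j) | j < n.+1]).

Lemma cone_emb N (y : {set 'I_n.+2} * 'X_{1..n.+2}) v : (y.2 m2 < N)%N ->
  cone y (emb N v) = (m2 \in y.1) && cone (restr y) v.
Proof.
move=> lt; apply/idP/andP.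
  move/coneP'/forall_split2 => [H1 [_ H2]].
  split.
    apply: NNPP => /negP /H2; rewrite embE_max => e.
    by move: lt; rewrite -e ltnNge leq_addl.
  apply/coneP' => j; have [a b] := H1 j; rewrite embE_lift in a b.
  by rewrite /restr /= mnmE inE.
case=> hm /coneP' H; apply/coneP'/forall_split2; split.
  move=> j; have [a b] := H j; move: a b; rewrite /restr /= mnmE inE embE_lift.
  by split.
rewrite embE_max hm; split => //.
by apply: leq_trans (ltnW lt) (leq_addl _ _).
Qed.

Lemma card_restr (y : {set 'I_n.+2} * 'X_{1..n.+2}) : m2 \in y.1 ->
  #|y.1| = #|(restr y).1|.+1.
Proof.
move=> hm; have -> : y.1 = m2 |: liftS (restr y).1.
  apply/setP => i; rewrite in_setU1; case: (unliftP m2 i) => [j ->|->].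
    by rewrite Lm2 mem_liftS /restr /= inE.
  by rewrite eqxx hm.
by rewrite cardsU1 max_notin_liftS card_liftS.
Qed.

End Down.

Lemma cdec_down n (M : 'X_{1..n.+1} -> Prop) d :
  has_cdec (fun w : 'X_{1..n.+2} => M (proj w)) d.+1 -> has_cdec M d.
Proof.
case=> s [hs hd].
pose N := (\max_(y <- s) y.2 ord_max).+1.
have ltN : forall y, y \in s -> (y.2 ord_max < N)%N.
  by move=> y ys; rewrite ltnS; exact: (leq_bigmax_seq (F := fun y : {set 'I_n.+2} * 'X_{1..n.+2} => y.2 ord_max) y ys).
exists (map (@restr n) (filter (fun y : {set 'I_n.+2} * 'X_{1..n.+2} => ord_max \in y.1) s)); split.
  move=> v; rewrite count_map count_filter; rewrite -[in RHS](proj_emb N v) -hs.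
  apply: eq_in_count => y ys /=; rewrite cone_emb ?ltN // andbC; by [].
move=> x /mapP [y]; rewrite mem_filter => /andP [hm ys] ->.
by have := hd y ys; rewrite card_restr.
Qed.
Section Dickson.
Variable k : nat.

Lemma dickson_gen (c : nat) : forall (P : 'X_{1..k} -> Prop) (C : {set 'I_k}),
  (#|C| <= c)%N -> exists L : seq 'X_{1..k}, (forall l, l \in L -> P l) /\
  forall m, P m -> exists2 l, l \in L & forall i, i \in C -> (l i <= m i)%N.
Proof.
elim: c => [|c IH] P C hC.
  case: (classic (exists m0, P m0)) => [[m0 Pm0]|nP].
    exists [:: m0]; split; first by move=> l; rewrite inE => /eqP ->.
    move=> m _; exists m0; first exact: mem_head.
    by move=> i iC; move: hC; rewrite leqn0 cards_eq0 => /eqP C0; rewrite C0 inE in iC.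
  by exists [::]; split => // m Pm; case: nP; exists m.
case: (classic (exists m0, P m0)) => [[m0 Pm0]|nP]; last first.
  by exists [::]; split => // m Pm; case: nP; exists m.
have comb : forall ps : seq ('I_k * nat), (forall p, p \in ps -> p.1 \in C) ->
  exists L : seq 'X_{1..k}, (forall l, l \in L -> P l) /\
  forall p, p \in ps -> forall m, P m -> m p.1 = p.2 ->
     exists2 l, l \in L & forall i, i \in C -> (l i <= m i)%N.
  elim=> [|p ps IHps] hps; first by exists [::]; split.
  have hps1 : forall q, q \in ps -> q.1 \in C by move=> q hq; apply: hps; rewrite inE hq orbT.
  have [L1 [HL1 CL1]] := IHps hps1.
  have pC : p.1 \in C by apply: hps; exact: mem_head.
  have hC' : (#|C :\ p.1| <= c)%N.
    by move: hC; rewrite (cardsD1 p.1) pC add1n ltnS.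
  have [L2 [HL2 CL2]] := IH (fun m => P m /\ m p.1 = p.2) _ hC'.
  exists (L2 ++ L1); split.
    by move=> l; rewrite mem_cat => /orP [/HL2 [] | /HL1].
  move=> q; rewrite inE => /orP [/eqP -> | hq] m Pm e.
    have [l hl H] := CL2 m (conj Pm e); exists l; first by rewrite mem_cat hl.
    move=> i iC; case: (eqVneq i p.1) => [->|ni].
      by have [_ ->] := HL2 l hl; rewrite e.
    by apply: H; rewrite in_setD1 ni.
  by have [l hl H] := CL1 q hq m Pm e; exists l => //; rewrite mem_cat hl orbT.
have hps : forall p, p \in [seq (i, v) | i <- enum C, v <- iota 0 (mdeg m0)] -> p.1 \in C.
  by move=> p /allpairsP [[i v] [hi _ ->]]; rewrite mem_enum in hi.
have [L [HL CL]] := comb _ hps.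
exists (m0 :: L); split.
  by move=> l; rewrite inE => /orP [/eqP -> | /HL].
move=> m Pm; case: (classic (forall i, i \in C -> (m0 i <= m i)%N)) => H.
  by exists m0 => //; exact: mem_head.
have [i [iC lt]] : exists i, i \in C /\ (m i < m0 i)%N.
  apply: NNPP => hn; apply: H => i iC; rewrite leqNgt; apply/negP => lt.
  by apply: hn; exists i.
have hp : (i, m i) \in [seq (i, v) | i <- enum C, v <- iota 0 (mdeg m0)].
  apply: allpairs_f; first by rewrite mem_enum.
  rewrite mem_iota add0n; apply: leq_trans lt _; rewrite mdegE.
  by rewrite (bigD1 i) //= leq_addr.
have [l hl Hl] := CL _ hp m Pm erefl.
by exists l => //; rewrite inE hl orbT.
Qed.

Lemma dickson (P : 'X_{1..k} -> Prop) : exists L : seq 'X_{1..k},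
  (forall l, l \in L -> P l) /\ forall m, P m -> exists2 l, l \in L & (l <= m)%MM.
Proof.
have [L [HL CL]] := @dickson_gen #|[set: 'I_k]| P [set: 'I_k] (leqnn _).
exists L; split => // m Pm; have [l hl H] := CL m Pm; exists l => //.
by apply/mnm_lepP => i; apply: H; rewrite inE.
Qed.
End Dickson.
Section Exist.
Variables (K : fieldType) (k : nat).

Definition trunc (N : nat) (m : 'X_{1..k}) : 'X_{1..k} := [multinom minn (m i) N | i < k].

Lemma trunc_le N m : (trunc N m <= m)%MM.
Proof. by apply/mnm_lepP => i; rewrite mnmE geq_minl. Qed.

Lemma coord_le_mdeg (l : 'X_{1..k}) i : (l i <= mdeg l)%N.
Proof. by rewrite mdegE (bigD1 i) //= leq_addr. Qed.

Lemma trunc_bound (I : polyset K k) : is_monomial_ideal I ->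
  exists N, forall N', (N <= N')%N -> forall m, I 'X_[m] <-> I 'X_[trunc N' m].
Proof.
move=> hI; have [L [HL CL]] := dickson (fun m => I 'X_[m]).
exists (\max_(l <- L) mdeg l) => N' le m; split => Im; last first.
  exact: mon_ideal_up hI _ _ Im (trunc_le _ _).
have [l hl lm] := CL m Im; apply: mon_ideal_up hI _ _ (HL l hl) _.
apply/mnm_lepP => i; rewrite mnmE leq_min (mnm_lepP lm i) /=.
apply: leq_trans (coord_le_mdeg l i) _; apply: leq_trans le.
exact: (leq_bigmax_seq (F := fun l => mdeg l) l hl).
Qed.

Lemma exists_cdec (I J : polyset K k) : is_monomial_ideal I -> is_monomial_ideal J ->
  has_cdec (Mon I J) 0.
Proof.
move=> hI hJ; have [NI HI] := trunc_bound hI; have [NJ HJ] := trunc_bound hJ.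
pose N := maxn NI NJ.
have MonT : forall m, Mon I J m <-> Mon I J (trunc N m).
  move=> m; rewrite /Mon (HI N (leq_maxl _ _) m) (HJ N (leq_maxr _ _) m); by [].
pose T := {ffun 'I_k -> 'I_N.+1}.
pose mf (f : T) : 'X_{1..k} := [multinom (f i : nat) | i < k].
pose Zf (f : T) : {set 'I_k} := [set i | (f i : nat) == N].
have coneE : forall f m, cone (Zf f, mf f) m = (mf f == trunc N m).
  move=> f m; apply/coneP'/eqP => [H|e i].
    apply/mnmP => i; rewrite !mnmE; have [a b] := H i; move: a b; rewrite /= /Zf inE !mnmE.
    have := ltn_ord (f i); case: eqP => [e _ a _|nN lt a /(_ isT) e]; lia.
  have := congr1 (fun x : 'X_{1..k} => x i) e; rewrite /= !mnmE /Zf inE => e'.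
  split; first lia.
  move=> hn; lia.
exists (map (fun f : T => (Zf f, mf f)) (filter (fun f : T => pbool (Mon I J (mf f))) (enum T))).
split; last by move=> *.
move=> m.
pose ft : T := [ffun i => inord (minn (m i) N)].
have mfE : forall f, (mf f == trunc N m) = (f == ft).
  move=> f; apply/eqP/eqP => [e|->].
    apply/ffunP => i; apply/val_inj; rewrite ffunE /= inordK; last by rewrite ltnS geq_minr.
    by have := congr1 (fun x : 'X_{1..k} => x i) e; rewrite /= !mnmE.
  by apply/mnmP => i; rewrite !mnmE ffunE inordK // ltnS geq_minr.
rewrite count_map count_filter.
rewrite (eq_count (a2 := fun f => pbool (Mon I J (trunc N m)) && (f == ft))); last first.
  move=> f /=; rewrite coneE mfE.
  have mft : mf ft = trunc N m by apply/eqP; rewrite mfE.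
  by case: (eqVneq f ft) => [->|_]; rewrite ?mft ?andbT ?andbF.
have Mt : pbool (Mon I J (trunc N m)) = pbool (Mon I J m).
  by apply/idP/idP => /pboolP h; apply/pboolP; [exact: (MonT m).2 | exact: (MonT m).1].
rewrite Mt; case: pboolP => _.
  by rewrite (eq_count (a2 := pred1 ft)) // count_uniq_mem ?enum_uniq // mem_enum.
by rewrite (eq_count (a2 := pred0)) ?count_pred0.
Qed.
End Exist.
Section Final.
Variables (K : fieldType) (k : nat) (I J : polyset K k).

Lemma sdepth_spec : has_sdec_depth_ge I J 0 ->
  [/\ has_sdec_depth_ge I J (sdepth I J), (sdepth I J <= k)%N &
      forall d, (d <= k)%N -> has_sdec_depth_ge I J d -> (d <= sdepth I J)%N].
Proof.
move=> h0; split.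
- rewrite /sdepth (bigmax_eq_arg (ord0 : 'I_k.+1)); last by apply/pboolP.
  by case: arg_maxnP => [|i /pboolP Pi _]; [apply/pboolP|].
- by apply/bigmax_leqP => i _; rewrite -ltnS ltn_ord.
- move=> d hd hD; rewrite /sdepth.
  have := leq_bigmax_cond (F := fun d : 'I_k.+1 => nat_of_ord d) (P := fun d : 'I_k.+1 => pbool (has_sdec_depth_ge I J d)) (Ordinal (hd : (d < k.+1)%N)).
  by apply; apply/pboolP.
Qed.

Lemma sdepth_char s : has_sdec_depth_ge I J s -> (s <= k)%N ->
  (forall d, (d <= k)%N -> has_sdec_depth_ge I J d -> (d <= s)%N) -> sdepth I J = s.
Proof.
move=> hs sk H; apply/eqP; rewrite eqn_leq; apply/andP; split.
  by apply/bigmax_leqP => i /pboolP hi; apply: H => //; rewrite -ltnS ltn_ord.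
have := leq_bigmax_cond (F := fun d : 'I_k.+1 => nat_of_ord d) (P := fun d : 'I_k.+1 => pbool (has_sdec_depth_ge I J d)) (Ordinal (sk : (s < k.+1)%N)).
by apply; apply/pboolP.
Qed.

End Final.

Lemma has_cdec_ext k (M1 M2 : 'X_{1..k} -> Prop) d : (forall m, M1 m <-> M2 m) ->
  has_cdec M1 d -> has_cdec M2 d.
Proof.
move=> E [s [hs hd]]; exists s; split => // m; rewrite hs; congr nat_of_bool.
by apply/idP/idP => /pboolP h; apply/pboolP; apply/E.
Qed.

Theorem proposition5p2 (K : fieldType) (n : nat) (I J : polyset K n.+1) :
  is_monomial_ideal I -> is_monomial_ideal J ->
  (forall p, J p -> I p) -> (exists p, I p /\ ~ J p) ->
  sdepth (ext_ideal I) (ext_ideal J) = (sdepth I J).+1.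
Proof.
move=> hI hJ _ _.
have hI' := ext_ideal_mon I; have hJ' := ext_ideal_mon J.
have up d : has_sdec_depth_ge I J d -> has_sdec_depth_ge (ext_ideal I) (ext_ideal J) d.+1.
  move/(transfer _ hI hJ)/cdec_up => h; apply/(transfer _ hI' hJ').
  by apply: has_cdec_ext h => w; rewrite Mon_ext.
have down d : has_sdec_depth_ge (ext_ideal I) (ext_ideal J) d.+1 -> has_sdec_depth_ge I J d.
  move/(transfer _ hI' hJ') => h; apply/(transfer _ hI hJ); apply: (@cdec_down n).
  by apply: has_cdec_ext h => w; rewrite Mon_ext.
have h0 : has_sdec_depth_ge I J 0 by apply/(transfer _ hI hJ); exact: exists_cdec.
have [hs sk hmax] := sdepth_spec h0.
apply: sdepth_char => //; first exact: up.
move=> [|d] hd // /down hD; rewrite ltnS; apply: hmax => //.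
Qed.
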